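(* Let $\mathbb{F}$ be an algebraically closed field. If $\mathcal{A}\subseteq\mathbf{O}$ is a non-zero (not necessarily unital) subalgebra, then there exists $g\in{\rm G}_2$ such that $1_{\mathbf{O}}\in g\mathcal{A}$ or $\mathbf{u}_1\in g\mathcal{A}$ or $e_1\in g\mathcal{A}$. In particular, if $\mathrm{char}\,\mathbb{F}=2$ and $\mathcal{A}$ is a non-zero subalgebra of $\mathbf{O}$ not contained in $\mathbf{O}_0=\{a\in\mathbf{O}\mid\mathrm{tr}(a)=0\}$, then there exists $g\in{\rm G}_2$ such that $e_1\in g\mathcal{A}$.
   Context: The split octonion algebra $\mathbf{O}$ is the 8-dimensional $\mathbb{F}$-vector space of formal matrices $a=\begin{pmatrix}\alpha&\mathbf{u}\\ \mathbf{v}&\beta\end{pmatrix}$ with $\alpha,\beta\in\mathbb{F}$, $\mathbf{u},\mathbf{v}\in\mathbb{F}^3$, with multiplication $\begin{pmatrix}\alpha&\mathbf{u}\\ \mathbf{v}&\beta\end{pmatrix}\begin{pmatrix}\alpha'&\mathbf{u}'\\ \mathbf{v}'&\beta'\end{pmatrix}=\begin{pmatrix}\alpha\alpha'+\mathbf{u}\cdot\mathbf{v}'&\alpha\mathbf{u}'+\beta'\mathbf{u}-\mathbf{v}\times\mathbf{v}'\\ \alpha'\mathbf{v}+\beta\mathbf{v}'+\mathbf{u}\times\mathbf{u}'&\beta\beta'+\mathbf{v}\cdot\mathbf{u}'\end{pmatrix}$ (dot product and cross product on $\mathbb{F}^3$). Trace $\mathrm{tr}(a)=\alpha+\beta$.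 With $\mathbf{c}_1,\mathbf{c}_2,\mathbf{c}_3$ the standard basis of $\mathbb{F}^3$: $e_1$ has $\alpha=1$ and all else $0$, $e_2$ has $\beta=1$ and all else $0$, $\mathbf{u}_1$ has $\mathbf{u}=\mathbf{c}_1$ and all else $0$; $1_{\mathbf{O}}=e_1+e_2$. ${\rm G}_2=\mathrm{Aut}(\mathbf{O})$. *)

(* Defs.v *)
From HB Require Import structures.
From mathcomp Require Import all_boot all_algebra.
Set Implicit Arguments. Unset Strict Implicit. Unset Printing Implicit Defensive.
Import GRing.Theory.
Local Open Scope ring_scope.

Section Oct.
Variable F : fieldType.

Record vec3 := V3 { c1 : F; c2 : F; c3 : F }.

Definition vadd (x y : vec3) := V3 (c1 x + c1 y) (c2 x + c2 y) (c3 x + c3 y).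
Definition vscale (k : F) (x : vec3) := V3 (k * c1 x) (k * c2 x) (k * c3 x).
Definition vdot (x y : vec3) : F := c1 x * c1 y + c2 x * c2 y + c3 x * c3 y.
Definition vcross (x y : vec3) : vec3 :=
  V3 (c2 x * c3 y - c3 x * c2 y) (c3 x * c1 y - c1 x * c3 y) (c1 x * c2 y - c2 x * c1 y).
Definition vzero : vec3 := V3 0 0 0.

(* a = ( alpha  u ; v  beta ) *)
Record oct := Oct { oalpha : F; ou : vec3; ov : vec3; obeta : F }.

Definition oadd (a b : oct) :=
  Oct (oalpha a + oalpha b) (vadd (ou a) (ou b)) (vadd (ov a) (ov b)) (obeta a + obeta b).
Definition oscale (k : F) (a : oct) :=
  Oct (k * oalpha a) (vscale k (ou a)) (vscale k (ov a)) (k * obeta a).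
Definition ozero : oct := Oct 0 vzero vzero 0.

Definition omul (a b : oct) : oct :=
  Oct (oalpha a * oalpha b + vdot (ou a) (ov b))
      (vadd (vadd (vscale (oalpha a) (ou b)) (vscale (obeta b) (ou a)))
            (vscale (-1) (vcross (ov a) (ov b))))
      (vadd (vadd (vscale (oalpha b) (ov a)) (vscale (obeta a) (ov b)))
            (vcross (ou a) (ou b)))
      (obeta a * obeta b + vdot (ov a) (ou b)).

Definition otr (a : oct) : F := oalpha a + obeta a.

Definition oe1 : oct := Oct 1 vzero vzero 0.
Definition oe2 : oct := Oct 0 vzero vzero 1.
Definition ou1 : oct := Oct 0 (V3 1 0 0) vzero 0.
Definition oone : oct := Oct 1 vzero vzero 1.

Definition is_subalgebra (A : oct -> Prop) : Prop :=
  [/\ A ozero,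
      (forall x y, A x -> A y -> A (oadd x y)),
      (forall k x, A x -> A (oscale k x)) &
      (forall x y, A x -> A y -> A (omul x y))].

Definition is_G2 (g : oct -> oct) : Prop :=
  [/\ (forall x y, g (oadd x y) = oadd (g x) (g y)),
      (forall k x, g (oscale k x) = oscale k (g x)),
      (forall x y, g (omul x y) = omul (g x) (g y)) &
      bijective g].

Definition in_image (g : oct -> oct) (A : oct -> Prop) (y : oct) : Prop :=
  exists2 x, A x & g x = y.

End Oct.

(* Main.v *)
Require Import Defs.
From mathcomp Require Import all_boot all_algebra.
From mathcomp Require Import ring.
Set Implicit Arguments. Unset Strict Implicit. Unset Printing Implicit Defensive.
Import GRing.Theory.
Local Open Scope ring_scope.

Ltac dest := repeat match goal with
  | x : oct _ |- _ => destruct x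
  | v : vec3 _ |- _ => destruct v end.

Ltac unf := rewrite /= ?/omul ?/oadd ?/oscale /= ?/vadd ?/vscale ?/vdot ?/vcross ?/vzero /=.
Ltac osplit := congr Oct; try congr V3.
Ltac oring := dest; unf; osplit; ring.
Definition phi (F : fieldType) (a : vec3 F) (x : oct F) : oct F :=
  Oct (oalpha x - vdot a (ou x))
      (vadd (ou x) (vcross a (ov x)))
      (vadd (vadd (ov x) (vscale (oalpha x - obeta x) a)) (vscale (- vdot a (ou x)) a))
      (obeta x + vdot a (ou x)).

Definition psi (F : fieldType) (b : vec3 F) (x : oct F) : oct F :=
  Oct (oalpha x - vdot b (ov x))
      (vadd (vadd (ou x) (vscale (oalpha x - obeta x) b)) (vscale (- vdot b (ov x)) b))
      (vadd (ov x) (vcross b (ou x)))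
      (obeta x + vdot b (ov x)).

Definition tau (F : fieldType) (x : oct F) : oct F :=
  Oct (obeta x) (vscale (-1) (ov x)) (vscale (-1) (ou x)) (oalpha x).

Lemma phiM (F : fieldType) a (x y : oct F) : phi a (omul x y) = omul (phi a x) (phi a y).
Proof. rewrite /phi. oring. Qed.
Lemma psiM (F : fieldType) a (x y : oct F) : psi a (omul x y) = omul (psi a x) (psi a y).
Proof. rewrite /psi. oring. Qed.
Lemma tauM (F : fieldType) (x y : oct F) : tau (omul x y) = omul (tau x) (tau y).
Proof. rewrite /tau. oring. Qed.

Definition onorm (F : fieldType) (x : oct F) := oalpha x * obeta x - vdot (ou x) (ov x).

Lemma phiD (F : fieldType) a (x y : oct F) : phi a (oadd x y) = oadd (phi a x) (phi a y).
Proof. rewrite /phi. oring. Qed.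
Lemma psiD (F : fieldType) a (x y : oct F) : psi a (oadd x y) = oadd (psi a x) (psi a y).
Proof. rewrite /psi. oring. Qed.
Lemma tauD (F : fieldType) (x y : oct F) : tau (oadd x y) = oadd (tau x) (tau y).
Proof. rewrite /tau. oring. Qed.
Lemma phiZ (F : fieldType) a k (x : oct F) : phi a (oscale k x) = oscale k (phi a x).
Proof. rewrite /phi. oring. Qed.
Lemma psiZ (F : fieldType) a k (x : oct F) : psi a (oscale k x) = oscale k (psi a x).
Proof. rewrite /psi. oring. Qed.
Lemma tauZ (F : fieldType) k (x : oct F) : tau (oscale k x) = oscale k (tau x).
Proof. rewrite /tau. oring. Qed.
Lemma phiK (F : fieldType) a (x : oct F) : phi (vscale (-1) a) (phi a x) = x.
Proof. rewrite /phi. oring. Qed.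
Lemma phiK' (F : fieldType) a (x : oct F) : phi a (phi (vscale (-1) a) x) = x.
Proof. rewrite /phi. oring. Qed.
Lemma psiK (F : fieldType) a (x : oct F) : psi (vscale (-1) a) (psi a x) = x.
Proof. rewrite /psi. oring. Qed.
Lemma psiK' (F : fieldType) a (x : oct F) : psi a (psi (vscale (-1) a) x) = x.
Proof. rewrite /psi. oring. Qed.
Lemma tauK (F : fieldType) (x : oct F) : tau (tau x) = x.
Proof. rewrite /tau. oring. Qed.

Lemma G2_phi (F : fieldType) (a : vec3 F) : is_G2 (phi a).
Proof.
split; [exact: phiD | exact: phiZ | exact: phiM |].
exists (phi (vscale (-1) a)); [exact: phiK | exact: phiK'].
Qed.
Lemma G2_psi (F : fieldType) (a : vec3 F) : is_G2 (psi a).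
Proof.
split; [exact: psiD | exact: psiZ | exact: psiM |].
exists (psi (vscale (-1) a)); [exact: psiK | exact: psiK'].
Qed.
Lemma G2_tau (F : fieldType) : is_G2 (@tau F).
Proof.
split; [exact: tauD | exact: tauZ | exact: tauM |].
exists (@tau F); exact: tauK.
Qed.
Lemma G2_id (F : fieldType) : is_G2 (@id (oct F)).
Proof. by split => //; exists id. Qed.
Lemma G2_comp (F : fieldType) (f g : oct F -> oct F) :
  is_G2 f -> is_G2 g -> is_G2 (f \o g).
Proof.
move=> [fD fZ fM fB] [gD gZ gM gB]; split => /=.
- by move=> x y; rewrite gD fD.
- by move=> k x; rewrite gZ fZ.
- by move=> x y; rewrite gM fM.
- exact: bij_comp.
Qed.

Lemma phi_tr (F : fieldType) a (x : oct F) : otr (phi a x) = otr x.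
Proof. dest; rewrite /otr /phi; unf; ring. Qed.
Lemma psi_tr (F : fieldType) a (x : oct F) : otr (psi a x) = otr x.
Proof. dest; rewrite /otr /psi; unf; ring. Qed.
Lemma tau_tr (F : fieldType) (x : oct F) : otr (tau x) = otr x.
Proof. dest; rewrite /otr /tau; unf; ring. Qed.
Lemma phi_n (F : fieldType) a (x : oct F) : onorm (phi a x) = onorm x.
Proof. dest; rewrite /onorm /phi; unf; ring. Qed.
Lemma psi_n (F : fieldType) a (x : oct F) : onorm (psi a x) = onorm x.
Proof. dest; rewrite /onorm /psi; unf; ring. Qed.
Lemma tau_n (F : fieldType) (x : oct F) : onorm (tau x) = onorm x.
Proof. dest; rewrite /onorm /tau; unf; ring. Qed.

Definition Rel (F : fieldType) (x y : oct F) :=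
  exists g, is_G2 g /\ exists2 l : F, l != 0 & g x = oscale l y.

Lemma oscale1 (F : fieldType) (x : oct F) : oscale 1 x = x.
Proof. oring. Qed.
Lemma oscaleM (F : fieldType) k l (x : oct F) : oscale k (oscale l x) = oscale (k * l) x.
Proof. oring. Qed.

Lemma Rel_map (F : fieldType) (g : oct F -> oct F) x y : is_G2 g -> g x = y -> Rel x y.
Proof. move=> Gg gx; exists g; split=> //; exists 1; [exact: oner_neq0 | by rewrite oscale1]. Qed.

Lemma Rel_trans (F : fieldType) (x y z : oct F) : Rel x y -> Rel y z -> Rel x z.
Proof.
move=> [g [Gg [l l0 gx]]] [h [Gh [m m0 hy]]]; exists (h \o g); split; first exact: G2_comp.
exists (l * m); first by rewrite mulf_neq0.
case: Gh => _ hZ _ _; by rewrite /= gx hZ hy oscaleM.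
Qed.

Lemma Rel_scale (F : fieldType) (x y : oct F) l : l != 0 -> Rel x (oscale l y) -> Rel x y.
Proof.
move=> l0 [g [Gg [m m0 gx]]]; exists g; split=> //; exists (m * l); first by rewrite mulf_neq0.
by rewrite gx oscaleM.
Qed.

Lemma S1 (F : fieldType) (x : oct F) : otr x = 0 -> onorm x = 0 -> oalpha x != 0 ->
  phi (vscale (- (oalpha x)^-1) (ov x)) x = Oct (0:F) (ou x) (vzero F) 0.
Proof.
case: x => al [u1 u2 u3] [v1 v2 v3] be; rewrite /otr /onorm /phi /vdot /=.
move=> /eqP; rewrite addr_eq0 => /eqP -> hn ha.
have {}hn : u1 * v1 = - (be * be) - u2 * v2 - u3 * v3.
  by rewrite -[LHS]addr0 -hn; ring.
unf; osplit; field: hn => //.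
Qed.

Lemma N0 (F : fieldType) (x : oct F) : otr x = 0 -> onorm x = 0 -> oalpha x != 0 ->
  ou x <> vzero F /\ Rel x (Oct 0 (ou x) (vzero F) 0).
Proof.
move=> ht hn ha; split; last by apply: (Rel_map (G2_phi _)); exact: S1.
move=> hu; move: ht hn ha hu; case: x => al u v be /=; rewrite /otr /onorm /=.
move=> ht hn ha hu; subst u; move: hn; rewrite /vdot /= !mul0r !addr0 subr0.
have -> : be = - al by apply/eqP; rewrite -addr_eq0 addrC ht.
move/eqP; rewrite mulrN oppr_eq0 mulf_eq0 orbb; by apply/negP.
Qed.

Definition vz (F : fieldType) (v : vec3 F) := [&& c1 v == 0, c2 v == 0 & c3 v == 0].

Lemma vzP (F : fieldType) (v : vec3 F) : vz v -> v = vzero F.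
Proof. by case: v => a b c; rewrite /vz /= => /and3P[/eqP-> /eqP-> /eqP->]. Qed.

Lemma vzN (F : fieldType) (v : vec3 F) : v <> vzero F -> ~~ vz v.
Proof. by move=> h; apply/negP => /vzP. Qed.

Lemma exists_dot (F : fieldType) (v : vec3 F) : ~~ vz v ->
  exists b, vdot b v = -1.
Proof.
case: v => a b c; rewrite /vz /= !negb_and => /or3P[] h.
- exists (V3 (- a^-1) 0 0); rewrite /vdot /=; field; done.
- exists (V3 0 (- b^-1) 0); rewrite /vdot /=; field; done.
- exists (V3 0 0 (- c^-1)); rewrite /vdot /=; field; done.
Qed.

Lemma N1 (F : fieldType) (x : oct F) : otr x = 0 -> onorm x = 0 -> x <> ozero F ->
  exists2 w, w <> vzero F & Rel x (Oct 0 w (vzero F) 0).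
Proof.
move=> ht hn hx.
have [a0|ha] := eqVneq (oalpha x) 0; last first.
  by case: (N0 ht hn ha) => hu hr; exists (ou x).
have [/vzP v0|hv] := boolP (vz (ov x)).
  exists (ou x).
    move=> hu; apply: hx; move: hn ht a0 hu v0; case: x => al u v be /= _.
    rewrite /otr /= => ht a0 hu v0; subst; move: ht; rewrite add0r => ->; done.
  apply: (Rel_map (G2_id F)); move: hx hn ht a0 v0; case: x => al u v be /= _ _.
  rewrite /otr /= => ht a0 v0; subst; move: ht; rewrite add0r => ->; done.
have [b hb] := exists_dot hv.
set y := psi b x.
have hty : otr y = 0 by rewrite /y psi_tr.
have hny : onorm y = 0 by rewrite /y psi_n.
have hay : oalpha y != 0 by rewrite /y /psi /= a0 hb sub0r opprK oner_eq0.
case: (N0 hty hny hay) => hu hr; exists (ou y) => //.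
apply: Rel_trans hr; exact: (Rel_map (G2_psi b)).
Qed.

Lemma Move_a (F : fieldType) (w b : vec3 F) :
  oalpha (psi b (tau (Oct 0 w (vzero F) 0))) = vdot b w.
Proof. by case: b => b1 b2 b3; case: w => w1 w2 w3; rewrite /psi /tau /vdot /=; ring. Qed.

Lemma Move_u (F : fieldType) (w b : vec3 F) :
  ou (psi b (tau (Oct 0 w (vzero F) 0))) = vscale (vdot b w) b.
Proof. case: b => b1 b2 b3; case: w => w1 w2 w3; rewrite /psi /tau /vdot /=. unf; congr V3; ring. Qed.

Lemma scale_u (F : fieldType) (s : F) b :
  oscale s (Oct 0 b (vzero F) 0) = Oct 0 (vscale s b) (vzero F) 0.
Proof. case: b => b1 b2 b3; rewrite /oscale /vscale /vzero /=; congr Oct; try congr V3; ring. Qed.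

Lemma Move (F : fieldType) (w b : vec3 F) : vdot b w != 0 ->
  Rel (Oct 0 w (vzero F) 0) (Oct 0 b (vzero F) 0).
Proof.
move=> hs.
have hx : Rel (Oct 0 w (vzero F) 0) (psi b (tau (Oct 0 w (vzero F) 0))).
  apply: (Rel_map (G2_comp (G2_psi b) (G2_tau F))); done.
have ht : otr (psi b (tau (Oct 0 w (vzero F) 0))) = 0 by rewrite psi_tr tau_tr /otr /=; ring.
have hn : onorm (psi b (tau (Oct 0 w (vzero F) 0))) = 0.
  by rewrite psi_n tau_n /onorm /vdot /=; ring.
have ha : oalpha (psi b (tau (Oct 0 w (vzero F) 0))) != 0 by rewrite Move_a.
have [_ hr] := N0 ht hn ha.
apply: (Rel_scale hs); apply: (Rel_trans hx); rewrite Move_u in hr.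
by rewrite scale_u.
Qed.

Lemma nz_of (F : fieldType) (a d : F) : a != 0 -> d = a -> d != 0.
Proof. by move=> h ->. Qed.
Ltac dotnz h := apply: (nz_of h); rewrite /vdot /=; ring.
Ltac dot1 := apply: (nz_of (@oner_neq0 _)); rewrite /vdot /=; ring.

Lemma N2 (F : fieldType) (w : vec3 F) : ~~ vz w -> Rel (Oct 0 w (vzero F) 0) (ou1 F).
Proof.
case: w => a b c; rewrite /vz /= !negb_and => /or3P[] h; rewrite /ou1.
- by apply: Move; dotnz h.
- apply: (Rel_trans (Move (b := V3 0 1 0) _)); first by dotnz h.
  apply: (Rel_trans (Move (b := V3 1 1 0) _)); first by dot1.
  by apply: Move; dot1.
- apply: (Rel_trans (Move (b := V3 0 0 1) _)); first by dotnz h.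
  apply: (Rel_trans (Move (b := V3 1 0 1) _)); first by dot1.
  by apply: Move; dot1.
Qed.

Lemma I0 (F : fieldType) (e : oct F) : otr e = 1 -> onorm e = 0 -> oalpha e != 0 ->
  phi (vscale (-1) (ov e)) (psi (vscale (- (oalpha e)^-1) (ou e)) e) = oe1 F.
Proof.
case: e => al [u1 u2 u3] [v1 v2 v3] be; rewrite /otr /onorm /phi /psi /vdot /=.
move=> ht hn ha.
have hb : be = 1 - al by rewrite -ht; ring.
rewrite hb in hn *.
have {}hn : u1 * v1 = al * (1 - al) - u2 * v2 - u3 * v3.
  by rewrite -[LHS]addr0 -hn; ring.
rewrite /oe1; unf; osplit; field: hn => //.
Qed.

Lemma I1 (F : fieldType) (e : oct F) : otr e = 1 -> onorm e = 0 ->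
  exists g, is_G2 g /\ g e = oe1 F.
Proof.
move=> ht hn.
have [a0|ha] := eqVneq (oalpha e) 0; last first.
  exists (phi (vscale (-1) (ov e)) \o psi (vscale (- (oalpha e)^-1) (ou e))).
  by split; [exact: G2_comp (G2_phi _) (G2_psi _) | rewrite /= I0].
have ht' : otr (tau e) = 1 by rewrite tau_tr.
have hn' : onorm (tau e) = 0 by rewrite tau_n.
have ha' : oalpha (tau e) != 0.
  by move: ht; rewrite /otr /tau /= a0 add0r => ->; exact: oner_neq0.
exists ((phi (vscale (-1) (ov (tau e))) \o psi (vscale (- (oalpha (tau e))^-1) (ou (tau e)))) \o @tau F).
split; first exact: (G2_comp (G2_comp (G2_phi _) (G2_psi _)) (G2_tau F)).
by rewrite /= (I0 ht' hn' ha').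
Qed.

Lemma sqE (F : fieldType) (x : oct F) :
  omul x x = oadd (oscale (otr x) x) (oscale (- onorm x) (oone F)).
Proof. rewrite /otr /onorm /oone; oring. Qed.

Lemma oneE (F : fieldType) (x y : oct F) t n : n != 0 ->
  y = oadd (oscale t x) (oscale (- n) (oone F)) ->
  oone F = oscale (n^-1) (oadd (oscale t x) (oscale (-1) y)).
Proof. move=> hn ->; rewrite /oone; dest; unf; osplit; field => //. Qed.

Lemma otrZ (F : fieldType) k (x : oct F) : otr (oscale k x) = k * otr x.
Proof. dest; rewrite /otr /=; ring. Qed.
Lemma onormZ (F : fieldType) k (x : oct F) : onorm (oscale k x) = k ^+ 2 * onorm x.
Proof. dest; rewrite /onorm /=; unf; ring. Qed.
Lemma otrZ1 (F : fieldType) k q (x : oct F) :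
  otr (oadd (oscale k x) (oscale q (oone F))) = k * otr x + q *+ 2.
Proof. dest; rewrite /otr /=; ring. Qed.
Lemma onormZ1 (F : fieldType) k q (x : oct F) :
  onorm (oadd (oscale k x) (oscale q (oone F))) = k ^+ 2 * onorm x + k * q * otr x + q ^+ 2.
Proof. dest; rewrite /onorm /otr /=; unf; ring. Qed.

Lemma oscaleV (F : fieldType) (g : oct F -> oct F) x y l : is_G2 g -> l != 0 ->
  g x = oscale l y -> g (oscale l^-1 x) = y.
Proof.
move=> [_ gZ _ _] l0 gx; rewrite gZ gx oscaleM mulVf // oscale1 //.
Qed.

Lemma oscale0 (F : fieldType) (y : oct F) : oscale 0 y = ozero F.
Proof. rewrite /ozero; oring. Qed.

Theorem lemma6p6 (F : closedFieldType) :
  (forall A : oct F -> Prop,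
     is_subalgebra A -> (exists2 x, A x & x <> ozero F) ->
     exists g, is_G2 g /\
       [\/ in_image g A (oone F), in_image g A (ou1 F) | in_image g A (oe1 F)]) /\
  (2%N \in [pchar F] ->
   forall A : oct F -> Prop,
     is_subalgebra A -> (exists2 x, A x & x <> ozero F) ->
     (exists2 x, A x & otr x != 0) ->
     exists g, is_G2 g /\ in_image g A (oe1 F)).
Proof.
split.
- move=> A; rewrite /is_subalgebra => -[A0 AD AZ AM] [x Ax x0].
  have Ax2 := AM _ _ Ax Ax.
  have [n0|hn] := eqVneq (onorm x) 0; last first.
    exists id; split; first exact: G2_id.
    constructor 1; exists (oscale (onorm x)^-1 (oadd (oscale (otr x) x) (oscale (-1) (omul x x)))).
      by apply: (AZ); apply: (AD); [apply: (AZ) | apply: (AZ)].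
    by rewrite /= -(oneE hn (sqE x)).
  have [t0|ht] := eqVneq (otr x) 0.
    have [w w0 hr] := N1 t0 n0 x0.
    have [g [Gg [l l0 gx]]] := Rel_trans hr (N2 (vzN w0)).
    exists g; split => //; constructor 2; exists (oscale l^-1 x); first exact: (AZ).
    exact: oscaleV gx.
  have [g [Gg ge]] : exists g, is_G2 g /\ g (oscale (otr x)^-1 x) = oe1 F.
    by apply: I1; rewrite ?otrZ ?onormZ ?mulVf // n0 mulr0.
  by exists g; split => //; constructor 3; exists (oscale (otr x)^-1 x) => //; exact: (AZ).
- move=> ch2 A; rewrite /is_subalgebra => -[A0 AD AZ AM] _ [x Ax ht].
  set t := otr x; set n := onorm x.
  have [q hq] : exists q : F, q ^+ 2 + q + n / t ^+ 2 = 0.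
    have [q hq] := @GRing.solve_monicpoly F 2 (nth 0 [:: - (n / t ^+ 2); -1]) isT.
    exists q; move: hq; rewrite !big_ord_recl big_ord0 /= => ->.
    rewrite /bump /=; ring.
  have Ae : A (oadd (oscale t^-1 x) (oscale (if n == 0 then 0 else q) (oone F))).
    apply: (AD); first exact: (AZ).
    case: eqP => [_|/eqP hn]; first by rewrite oscale0.
    apply: (AZ); rewrite (oneE hn (sqE x)); apply: (AZ); apply: (AD); first exact: (AZ).
    by apply: (AZ); apply: (AM).
  have h1 : otr (oadd (oscale t^-1 x) (oscale (if n == 0 then 0 else q) (oone F))) = 1.
    by rewrite otrZ1 mulrn_pchar // mulVf // addr0.
  have h2 : onorm (oadd (oscale t^-1 x) (oscale (if n == 0 then 0 else q) (oone F))) = 0.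
    rewrite onormZ1 -/t -/n; case: eqP => [->|_]; first by rewrite !(mulr0, mul0r, expr0n, addr0).
    rewrite -[RHS]hq; field => //.
  have [g [Gg ge]] := I1 h1 h2.
  exists g; split => //; by exists (oadd (oscale t^-1 x) (oscale (if n == 0 then 0 else q) (oone F))).
Qed.
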